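(* Let $L$ be a uniquely complemented lattice that is not distributive. Then $L$ has infinite width, i.e. $L$ contains antichains of arbitrarily large finite size (there is no finite bound on the cardinality of antichains in $L$).
   Context: A uniquely complemented lattice is a bounded lattice (with least element $0$ and greatest element $1$) in which every element $x$ has exactly one complement, i.e. exactly one $y$ with $x \wedge y = 0$ and $x \vee y = 1$. The width of a lattice is the supremum of the cardinalities of its antichains (sets of pairwise incomparable elements); the lattice has finite width if this supremum is a finite number. *)

(* Defs.v *)
From HB Require Import structures.
From mathcomp Require Import all_boot all_order.
Set Implicit Arguments. Unset Strict Implicit. Unset Printing Implicit Defensive.
Import Order.Theory.
Local Open Scope order_scope.

Definition is_complement (d : Order.disp_t) (L : tbLatticeType d) (x y : L) : Prop :=
  x `&` y = \bot /\ x `|` y = \top.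

Definition uniquely_complemented (d : Order.disp_t) (L : tbLatticeType d) : Prop :=
  forall x : L, exists y : L, is_complement x y /\ (forall z : L, is_complement x z -> z = y).

Definition distributive_lattice (d : Order.disp_t) (L : tbLatticeType d) : Prop :=
  forall x y z : L, x `&` (y `|` z) = (x `&` y) `|` (x `&` z).

Definition antichain (d : Order.disp_t) (L : tbLatticeType d) (s : seq L) : Prop :=
  uniq s /\ forall x y : L, x \in s -> y \in s -> x != y -> ~~ (x >=< y).

Definition finite_width (d : Order.disp_t) (L : tbLatticeType d) : Prop :=
  exists n : nat, forall s : seq L, antichain s -> (size s <= n)%N.

(* Main.v *)
Require Import Defs.
From mathcomp Require Import all_boot all_order.
From Stdlib Require Import Classical.
Set Implicit Arguments. Unset Strict Implicit. Unset Printing Implicit Defensive.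
Import Order.Theory.
Local Open Scope order_scope.

Lemma compl_uniq (d : Order.disp_t) (L : tbLatticeType d) (UC : uniquely_complemented L)
  (x y z : L) : is_complement x y -> is_complement x z -> y = z.
Proof. move=> hy hz; have [c [_ hc]] := UC x; by rewrite (hc _ hy) (hc _ hz). Qed.

Lemma compl_sym (d : Order.disp_t) (L : tbLatticeType d) (x y : L) :
  is_complement x y -> is_complement y x.
Proof. by case=> h1 h2; split; [rewrite meetC | rewrite joinC]. Qed.

Lemma le0 (d : Order.disp_t) (L : tbLatticeType d) (x : L) : x <= \bot -> x = \bot.
Proof. by rewrite lex0 => /eqP. Qed.

Lemma L1 (d : Order.disp_t) (L : tbLatticeType d) (UC : uniquely_complemented L)
  (u y u' : L) : u <= y -> u != y -> is_complement u u' -> y `&` u' != \bot.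
Proof.
move=> uy uny [c1 c2]; apply/negP => /eqP h.
have hc : is_complement u' y.
  split; first by rewrite meetC.
  apply/le_anti; rewrite lex1 /=; rewrite -c2 joinC; exact: leU2.
have := compl_uniq UC hc (compl_sym (conj c1 c2)) => e.
by rewrite e eqxx in uny.
Qed.

Definition disj (d : Order.disp_t) (L : tbLatticeType d) (s : seq L) : Prop :=
  uniq s /\ (forall x, x \in s -> x != \bot) /\
  (forall x y, x \in s -> y \in s -> x != y -> x `&` y = \bot).

Lemma disj_anti (d : Order.disp_t) (L : tbLatticeType d) (s : seq L) :
  disj s -> antichain s.
Proof.
move=> [u [nz dj]]; split=> // x y xs ys nxy; apply/negP => /orP [] h.
- have e := dj _ _ xs ys nxy; rewrite (meet_idPl h) in e.
  by move: (nz x xs); rewrite e eqxx.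
- have e := dj _ _ xs ys nxy; rewrite meetC (meet_idPl h) in e.
  by move: (nz y ys); rewrite e eqxx.
Qed.

Definition atom (d : Order.disp_t) (L : tbLatticeType d) (p : L) : Prop :=
  p != \bot /\ forall y, y <= p -> y = \bot \/ y = p.

Lemma atomic_k (d : Order.disp_t) (L : tbLatticeType d) (UC : uniquely_complemented L) k :
  forall z : L, z != \bot -> (forall s, disj s -> all (fun x => x <= z) s -> (size s <= k)%N) ->
  exists p, atom p /\ p <= z.
Proof.
elim: k => [|k IH] z nz hb.
  suff : (size [:: z] <= 0)%N by [].
  apply: hb; last by rewrite /= lexx.
  split=> //; split=> [x|x y]; rewrite !inE => /eqP -> //.
  by move=> /eqP -> /negP; rewrite eqxx.
case: (classic (forall y, y <= z -> y = \bot \/ y = z)) => [h|].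
  by exists z; split=> //; split.
move=> hn; have [y hy] := not_all_ex_not _ _ hn.
have [yz hy2] := imply_to_and _ _ hy; have [yn0 ynz] := not_or_and _ _ hy2.
have [y' [cy _]] := UC y.
have vnz := L1 UC yz (introN eqP ynz) cy.
have [p [ap py]] : exists p, atom p /\ p <= y.
  apply: IH; first exact/eqP.
  move=> s [us [nzs djs]] alls.
  have vs : z `&` y' \notin s.
    apply/negP => vin; move: (nzs _ vin); move/allP: alls => /(_ _ vin) h1.
    have : z `&` y' <= y `&` y' by rewrite lexI h1 leIr.
    by case: cy => -> _; rewrite lex0 => ->.
  have := hb (z `&` y' :: s); rewrite /= ltnS; apply; last first.
    rewrite leIl /=; apply/allP => x xs; apply: le_trans yz; exact: (allP alls).
  split; first by rewrite /= vs.
  split=> [x|x w]; rewrite !inE.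
    by case/orP => [/eqP -> //|]; exact: nzs.
  have key : forall a, a \in s -> a `&` (z `&` y') = \bot.
    move=> a ain; apply/le0; case: cy => <- _; apply: leI2; last exact: leIr.
    exact: (allP alls).
  case/orP => [/eqP ->|xs]; case/orP => [/eqP ->|ws] //.
  - by rewrite eqxx.
  - by move=> _; rewrite meetC key.
  - by move=> _; rewrite key.
  - exact: djs.
by exists p; split=> //; apply: le_trans yz.
Qed.

Lemma embed (d : Order.disp_t) (L : tbLatticeType d) (UC : uniquely_complemented L)
  (AT : forall z : L, z != \bot -> exists p, atom p /\ p <= z) (x y : L) :
  (forall p, atom p -> p <= x -> p <= y) -> x <= y.
Proof.
move=> h; case: (boolP (x <= y)) => // nxy; exfalso.
have [u' [cu _]] := UC (x `&` y).
have ne : x `&` y != x by apply/negP => /eqP e; move: nxy; rewrite -e leIr.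
have [p [ap pw]] := AT _ (L1 UC (leIl x y) ne cu).
have pn0 := ap.1.
have px : p <= x by apply: le_trans pw (leIl _ _).
have pxy : p <= x `&` y by rewrite lexI px (h _ ap px).
have : p <= (x `&` y) `&` u' by rewrite lexI pxy (le_trans pw (leIr _ _)).
by case: cu => -> _; rewrite lex0 (negbTE pn0).
Qed.

Lemma coatom (d : Order.disp_t) (L : tbLatticeType d) (UC : uniquely_complemented L)
  (p p' y : L) : atom p -> is_complement p p' -> p' <= y -> p' != y -> y = \top.
Proof.
move=> [pn0 hp] [c1 c2] py pny.
case: (hp (y `&` p) (leIr _ _)) => e.
  have hc : is_complement p y.
    split; first by rewrite meetC.
    apply/le_anti; rewrite lex1 -c2; apply: leU2 => //.
  by move: pny; rewrite (compl_uniq UC (conj c1 c2) hc) eqxx.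
apply/le_anti; rewrite lex1 -c2 leUx py andbT -e leIl //.
Qed.

Lemma other_atoms (d : Order.disp_t) (L : tbLatticeType d) (UC : uniquely_complemented L)
  (p p' r : L) : atom p -> atom r -> is_complement p p' -> r != p -> r <= p'.
Proof.
move=> ap [rn0 hr] cp rnp; case: (boolP (r <= p')) => // nrp; exfalso.
have m0 : r `&` p' = \bot.
  case: (hr _ (leIl r p')) => // e; by move: nrp; rewrite -e leIr.
have j1 : r `|` p' = \top.
  apply: (coatom UC ap cp (leUr _ _)); apply/negP => /eqP e.
  by move: nrp; rewrite e leUl.
have := compl_uniq UC (compl_sym (conj m0 j1)) (compl_sym cp) => e.
by rewrite e eqxx in rnp.
Qed.

Lemma distr (d : Order.disp_t) (L : tbLatticeType d) (UC : uniquely_complemented L)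
  (AT : forall z : L, z != \bot -> exists p, atom p /\ p <= z) : distributive_lattice L.
Proof.
have key : forall p p' x : L, atom p -> is_complement p p' -> ~~ (p <= x) -> x <= p'.
  move=> p p' x ap cp npx; apply: (embed UC AT) => r ar rx.
  apply: (other_atoms UC ap ar cp); apply/negP => /eqP e; by move: npx; rewrite -e rx.
move=> x y z; apply/le_anti; apply/andP; split; last first.
  by rewrite leUx; apply/andP; split; apply: leI2; rewrite ?lexx ?leUl ?leUr.
apply: (embed UC AT) => p ap.
rewrite lexI => /andP [px pyz].
case: (boolP (p <= y)) => py; first by apply: lexUl; rewrite lexI px py.
case: (boolP (p <= z)) => pz; first by apply: lexUr; rewrite lexI px pz.
have [p' [cp _]] := UC p.
have : y `|` z <= p' by rewrite leUx (key _ _ _ ap cp py) (key _ _ _ ap cp pz).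
move=> h; have : p <= p `&` p' by rewrite lexI lexx (le_trans pyz h).
case: ap => pn0 _; by case: cp => -> _; rewrite lex0 (negbTE pn0).
Qed.

Theorem proposition7p3 (d : Order.disp_t) (L : tbLatticeType d) :
  uniquely_complemented L -> ~ distributive_lattice L -> ~ finite_width L.
Proof.
move=> UC nD [n hn]; apply: nD; apply: (distr UC) => z nz.
apply: (atomic_k UC (k := n)) => // s ds _; apply: hn; exact: disj_anti.
Qed.
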